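(* Suppose the embedding errors are bounded as $\sup_{s,g\in\mathcal{S}}\bigl|d^*(s,g)-\|\phi(s)-\phi(g)\|\bigr|\le\epsilon_e$, the directional movement errors are bounded as $\sup_{s,g\in\mathcal{S}}\|z'^*(s,g)-\hat z'(s,g)\|\le\epsilon_d$, and $4\epsilon_e+\epsilon_d<1$. Then $\hat\pi$ is an optimal goal-reaching policy, i.e. for every $s,g\in\mathcal{S}$ with $s\neq g$, $d^*(p(s,\hat\pi(s,g)),g)=d^*(s,g)-1$.
   Context: Consider a deterministic Markov decision process with state space $\mathcal{S}$, action space $\mathcal{A}$ and deterministic transition function $p:\mathcal{S}\times\mathcal{A}\to\mathcal{S}$. Let $d^*:\mathcal{S}\times\mathcal{S}\to\mathbb{R}$ be the optimal temporal distance: $d^*(s,g)$ is the minimum number of time steps needed to reach $g$ from $s$, so it is a nonnegative integer and $d^*(s,s)=0$. Let $\phi:\mathcal{S}\to\mathcal{Z}$ be a map into a real Hilbert space with inner product $\langle\cdot,\cdot\rangle$ and induced norm $\|\cdot\|$. Let $N(s):=\{p(s,a):a\in\mathcal{A}\}$. For a state $s$ and a goal $g$ define $$z'^*(s,g):=\phi(s)+\frac{\phi(g)-\phi(s)}{\|\phi(g)-\phi(s)\|},$$ $$\hat\pi(s,g):=\arg\max_{a\in\mathcal{A}}\Bigl\langle\phi(s')-\phi(s),\frac{\phi(g)-\phi(s)}{\|\phi(g)-\phi(s)\|}\Bigr\rangle\ \text{ subject to } s'=p(s,a),\ \|\phi(s)-\phi(s')\|\le1,$$ $$\hat z'(s,g):=\phi\bigl(p(s,\hat\pi(s,g))\bigr).$$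 A goal-conditioned policy is optimal if, at every state-goal pair $(s,g)$ with $s\neq g$, the action it chooses decreases the temporal distance to $g$ by exactly one. *)

(* Defs.v *)
From HB Require Import structures.
From mathcomp Require Import all_boot all_order all_algebra.
From mathcomp Require Import all_classical all_reals all_analysis.
Set Implicit Arguments. Unset Strict Implicit. Unset Printing Implicit Defensive.
Import Order.TTheory GRing.Theory Num.Theory.
Import numFieldNormedType.Exports.
Local Open Scope ring_scope.

Definition is_inner_product (R : realType) (Z : completeNormedModType R)
  (ip : Z -> Z -> R) : Prop :=
  [/\ (forall x y, ip x y = ip y x),
      (forall (a : R) x y z, ip (a *: x + y) z = a * ip x z + ip y z)
    & (forall x, ip x x = `|x| ^+ 2)].

Fixpoint reach (S A : Type) (p : S -> A -> S) (n : nat) (s g : S) : Prop :=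
  match n with
  | 0 => s = g
  | n'.+1 => exists a : A, reach p n' (p s a) g
  end.

Definition is_optimal_temporal_distance (S A : Type) (p : S -> A -> S)
  (d : S -> S -> nat) : Prop :=
  forall s g, reach p (d s g) s g /\ (forall n, reach p n s g -> (d s g <= n)%N).

Definition zstar (R : realType) (Z : completeNormedModType R) (S : Type)
  (phi : S -> Z) (s g : S) : Z :=
  phi s + `|phi g - phi s|^-1 *: (phi g - phi s).

Definition dir_progress (R : realType) (Z : completeNormedModType R) (S : Type)
  (ip : Z -> Z -> R) (phi : S -> Z) (s g s' : S) : R :=
  ip (phi s' - phi s) (`|phi g - phi s|^-1 *: (phi g - phi s)).

Definition is_hat_pi (R : realType) (Z : completeNormedModType R) (S A : Type)
  (p : S -> A -> S) (ip : Z -> Z -> R) (phi : S -> Z) (pi : S -> S -> A)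
  (s g : S) : Prop :=
  `|phi s - phi (p s (pi s g))| <= 1 /\
  forall a : A, `|phi s - phi (p s a)| <= 1 ->
    dir_progress ip phi s g (p s a) <= dir_progress ip phi s g (p s (pi s g)).

(* Main.v *)
Require Import Defs.
From HB Require Import structures.
From mathcomp Require Import all_boot all_order all_algebra.
From mathcomp Require Import all_classical all_reals all_analysis.
From mathcomp Require Import lra zify.
Import Order.TTheory GRing.Theory Num.Theory.
Import numFieldNormedType.Exports.
Local Open Scope ring_scope.

Theorem corollaryC3 (R : realType) (Z : completeNormedModType R)
  (ip : Z -> Z -> R) (S A : Type) (p : S -> A -> S) (dstar : S -> S -> nat)
  (phi : S -> Z) (pi : S -> S -> A) (eps_e eps_d : R) :
  is_inner_product ip ->
  is_optimal_temporal_distance p dstar ->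
  (forall s g, s <> g -> is_hat_pi p ip phi pi s g) ->
  (forall s g, `| (dstar s g)%:R - `|phi s - phi g| | <= eps_e) ->
  (forall s g, s <> g -> `|zstar phi s g - phi (p s (pi s g))| <= eps_d) ->
  4 * eps_e + eps_d < 1 ->
  forall s g, s <> g ->
    dstar (p s (pi s g)) g = (dstar s g - 1)%N.
Proof.
move=> _ Hd _ He Hz Heps s g sg.
set s' := p s (pi s g).
have lower : (dstar s g <= (dstar s' g).+1)%N.
  apply: (proj2 (Hd s g)); exists (pi s g); exact: (proj1 (Hd s' g)).
have D1 : (1 <= dstar s g)%N.
  case E: (dstar s g) => [|n] //.
  have := proj1 (Hd s g); rewrite E /= => H; by case: sg.
have epse0 : 0 <= eps_e by apply: le_trans (He s g).
have epsd0 : 0 <= eps_d by apply: le_trans (Hz s g sg).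
set D := dstar s g; set d' := dstar s' g.
set L := `|phi g - phi s|.
have HL : D%:R - eps_e <= L /\ L <= D%:R + eps_e.
  have := He s g; rewrite -/D (distrC (phi s)) -/L => /ler_normlP [h1 h2]; split; lra.
have D1R : 1 <= D%:R :> R by rewrite ler1n.
have Lpos : 0 < L by case: HL => ? ?; lra.
have zg : `|zstar phi s g - phi g| = `|L - 1|.
  rewrite /zstar.
  have -> : phi s + L^-1 *: (phi g - phi s) - phi g = (L^-1 - 1) *: (phi g - phi s).
    by rewrite scalerBl scale1r opprB addrAC addrC.
  rewrite normrZ -/L -{2}(gtr0_norm Lpos) -normrM mulrBl mulVf ?mul1r //.
  - by rewrite distrC.
  - by rewrite gt_eqF.
have hs' : `|phi s' - phi g| <= `|L - 1| + eps_d.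
  rewrite -zg.
  have := Hz s g sg; rewrite -/s' => h.
  apply: le_trans (ler_distD (zstar phi s g) _ _) _.
  rewrite addrC; apply: lerD => //; by rewrite distrC.
have hL1 : `|L - 1| <= D%:R - 1 + eps_e.
  case: HL => ? ?; apply/ler_normlP; split; lra.
have hd' : d'%:R <= `|phi s' - phi g| + eps_e.
  have := He s' g; rewrite -/d' => /ler_normlP [h1 h2]; lra.
have : d'%:R < D%:R :> R by lra.
rewrite ltr_nat => lt; move: lower; rewrite -/D -/d'; lia.
Qed.
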